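(* Let $k$ be a positive integer and let $\sigma\in S_n$ have at least one $k$th root. Let $\ell_1,\dots,\ell_m$ be the distinct cycle lengths occurring in the disjoint cycle decomposition of $\sigma$ (fixed points counted as cycles of length $1$), and for each $i$ let $M_i\subseteq\{1,\dots,n\}$ be the set of points lying in cycles of $\sigma$ of length $\ell_i$ and $\sigma_i$ the restriction of $\sigma$ to $M_i$, viewed as a permutation of $M_i$. Then \[ \operatorname{re}_k(\sigma)-\operatorname{ro}_k(\sigma)=\prod_{i=1}^m\big(\operatorname{re}_k(\sigma_i)-\operatorname{ro}_k(\sigma_i)\big), \] where $\operatorname{re}_k(\sigma)$, $\operatorname{ro}_k(\sigma)$ are counted in $S_n$ and $\operatorname{re}_k(\sigma_i)$, $\operatorname{ro}_k(\sigma_i)$ are counted in the symmetric group on $M_i$.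
   Context: For a permutation $\pi$ of a finite set $M$, a $k$th root of $\pi$ is a permutation $\tau$ of $M$ with $\tau^k=\pi$. $\operatorname{re}_k(\pi)$ (resp. $\operatorname{ro}_k(\pi)$) denotes the number of $k$th roots of $\pi$ that are even (resp. odd) permutations of $M$. *)

(* Defs.v *)
From HB Require Import structures.
From mathcomp Require Import all_boot all_order all_algebra all_fingroup.
Set Implicit Arguments. Unset Strict Implicit. Unset Printing Implicit Defensive.
Import GRing.Theory.

Definition re (k : nat) (T : finType) (s : {perm T}) : nat :=
  #|[set t : {perm T} | (t ^+ k == s)%g && ~~ odd_perm t]|.
Definition ro (k : nat) (T : finType) (s : {perm T}) : nat :=
  #|[set t : {perm T} | (t ^+ k == s)%g && odd_perm t]|.

(* Restriction of s to a subset M, as a permutation of the finite type of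
   elements of M.  (When M is s-stable, the underlying function is injective
   and this is the genuine restriction; otherwise a junk value 1.) *)
Definition restr_fun (T : finType) (M : {set T}) (s : {perm T})
  (x : {x : T | x \in M}) : {x : T | x \in M} := insubd x (s (val x)).

Definition restr_sub (T : finType) (M : {set T}) (s : {perm T})
  : {perm {x : T | x \in M}} :=
  match @injectiveP _ _ (@restr_fun T M s) with
  | ReflectT h => perm h
  | ReflectF _ => 1%g
  end.

Definition cyc_pts (T : finType) (s : {perm T}) (l : nat) : {set T} :=
  [set x | #|porbit s x| == l].

Definition cyc_lengths (T : finType) (s : {perm T}) : seq nat :=
  undup [seq #|porbit s x| | x <- enum T].

(* Main.v *)
Require Import Defs.
From HB Require Import structures.
From mathcomp Require Import all_boot all_order all_algebra all_fingroup.
Import GRing.Theory.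
Set Implicit Arguments. Unset Strict Implicit.

Section Gen.
Local Open Scope group_scope.
Variable T : finType.
Implicit Types (u v s : {perm T}) (S A M B : {set T}).

Lemma stabN u S : (forall x, x \in S -> u x \in S) -> u \in 'N(S | 'P).
Proof.
move=> H; apply/astabsP => x /=; rewrite apermE.
apply/idP/idP; last exact: H.
move=> uxS.
have sub : u @: S \subset S by apply/subsetP=> y /imsetP[z zS ->]; exact: H.
have eq : u @: S = S.
  by apply/eqP; rewrite eqEcard sub (card_imset _ (@perm_inj _ u)) leqnn.
by rewrite -eq (mem_imset _ _ (@perm_inj _ u)) in uxS.
Qed.

Lemma rpE u S x : u \in 'N(S | 'P) ->
  restr_perm S u x = if x \in S then u x else x.
Proof.
move=> uN; case: ifP => xS; first by rewrite restr_permE.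
by rewrite (out_perm (restr_perm_on _ _)) ?xS.
Qed.

Lemma rpX u S n : u \in 'N(S | 'P) -> ((restr_perm S u) ^+ n)%g = restr_perm S (u ^+ n)%g.
Proof. by move=> uN; rewrite (morphX (restr_perm_morphism S) n uN). Qed.


Lemma rpN1 S u v : u \in 'N(S | 'P) -> v \in 'N(S | 'P) -> u * v \in 'N(S | 'P).
Proof. by move=> *; rewrite groupM. Qed.

Lemma porbit_rp s S x : s \in 'N(S | 'P) -> x \in S ->
  porbit (restr_perm S s) x = porbit s x.
Proof.
move=> sN xS; apply/setP => y.
apply/porbitP/porbitP => -[i ->]; exists i;
  by rewrite rpX // rpE ?xS // groupX.
Qed.

Lemma porbit_comm u r x : commute u r -> porbit r (u x) = u @: porbit r x.
Proof.
move=> cur.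
have key i : (r ^+ i) (u x) = u ((r ^+ i) x).
  by rewrite -permM (commuteX i cur) permM.
apply/setP => y; apply/porbitP/imsetP => [[i ->]|[z /porbitP[i ->] ->]].
  by exists ((r ^+ i) x); [exact: mem_porbit | exact: key].
by exists i; rewrite key.
Qed.

Lemma card_porbit_comm u r x : commute u r -> #|porbit r (u x)| = #|porbit r x|.
Proof. by move=> cur; rewrite porbit_comm // card_imset //; exact: perm_inj. Qed.

End Gen.

Definition sg (T : finType) (u : {perm T}) : int := (-1) ^+ odd_perm u.
Definition G (T : finType) k (s : {perm T}) (A : {set T}) : int :=
  \sum_(u : {perm T} | perm_on A u && ((u ^+ k)%g == restr_perm A s)) sg u.
Definition SS (T : finType) k (s : {perm T}) : int :=
  \sum_(u : {perm T} | (u ^+ k)%g == s) sg u.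

Local Open Scope ring_scope.

Lemma reroE (T : finType) k (s : {perm T}) : (re k s)%:Z - (ro k s)%:Z = SS k s.
Proof.
rewrite /SS (bigID (fun u : {perm T} => odd_perm u)) /= addrC.
rewrite (eq_bigr (fun _ => 1)); last by move=> u /andP[_ /negbTE]; rewrite /sg => ->.
rewrite [X in _ = _ + X](eq_bigr (fun _ => -1)); last by move=> u /andP[_]; rewrite /sg => ->.
rewrite !sumr_const /re /ro !cardsE.
by rewrite mulNrn !natz.
Qed.

Section Split.
Variable T : finType.
Implicit Types (u v s : {perm T}) (S A M B : {set T}).
Local Open Scope group_scope.

Lemma perm_onN S u : perm_on S u -> u \in 'N(S | 'P).
Proof. by move=> pu; apply: stabN => x xS; rewrite perm_closed. Qed.

Lemma perm_on_disjN M B u : perm_on B u -> [disjoint M & B] -> u \in 'N(M | 'P).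
Proof.
move=> pu dMB; apply: stabN => x xM.
by rewrite (out_perm pu) // (disjointFr dMB xM).
Qed.

Lemma rpT s : restr_perm [set: T] s = s.
Proof.
apply/permP => x; rewrite rpE; first by rewrite inE.
by apply: stabN => y; rewrite inE.
Qed.

Lemma rp_on S u : perm_on S u -> restr_perm S u = u.
Proof.
move=> pu; apply/permP => x; rewrite rpE ?perm_onN //.
by case: ifP => // /negbT xS; rewrite (out_perm pu).
Qed.

Lemma GT k s : G k s [set: T] = SS k s.
Proof.
rewrite /G /SS rpT; apply: eq_bigl => u.
by rewrite (_ : perm_on _ u) //; apply/subsetP => x; rewrite inE.
Qed.

Lemma G0 k s : G k s set0 = 1%R.
Proof.
rewrite /G (big_pred1 1).
  by rewrite /sg odd_perm1.
move=> u /=.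
have r1 : restr_perm set0 s = 1 by apply: perm_on_id (restr_perm_on _ _) _; rewrite cards0.
rewrite r1; apply/andP/eqP => [[pu _]|->].
  by apply: perm_on_id pu _; rewrite cards0.
by rewrite expg1n eqxx perm_on1.
Qed.


Lemma stabE S u x : u \in 'N(S | 'P) -> (u x \in S) = (x \in S).
Proof. by move=> uN; exact: (astabs_act x uN). Qed.

Lemma sgM u v : sg (u * v) = (sg u * sg v)%R.
Proof. by rewrite /sg odd_permM signr_addb. Qed.

Lemma G_split k s M B :
  [disjoint M & B] -> s \in 'N(M | 'P) -> s \in 'N(B | 'P) ->
  (forall u, perm_on (M :|: B) u -> u ^+ k = restr_perm (M :|: B) s ->
     u \in 'N(M | 'P)) ->
  G k s (M :|: B) = (G k s M * G k s B)%R.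
Proof.
move=> dMB sM sB hyp.
set A := M :|: B.
have sA : s \in 'N(A | 'P).
  apply: stabN => x; rewrite !inE => /orP[xM|xB].
    by rewrite (stabE _ sM) xM.
  by rewrite (stabE _ sB) xB orbT.
have hBN u : perm_on A u -> u \in 'N(M | 'P) -> u \in 'N(B | 'P).
  move=> pu uM; apply: stabN => x xB.
  have xA : x \in A by rewrite inE xB orbT.
  have : u x \in A by rewrite perm_closed.
  rewrite inE (stabE _ uM) (disjointFl dMB xB) /=.
  done.
have decomp u : perm_on A u -> u \in 'N(M | 'P) ->
    restr_perm M u * restr_perm B u = u.
  move=> pu uM; have uB := hBN u pu uM.
  apply/permP => x; rewrite permM (rpE _ uM).
  case xM: (x \in M).
    have uxM : u x \in M by rewrite (stabE _ uM).
    by rewrite (rpE _ uB) (disjointFr dMB uxM).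
  rewrite (rpE _ uB); case: ifP => // xB.
  by rewrite (out_perm pu) // inE xM xB.
have rAM : restr_perm M (restr_perm A s) = restr_perm M s.
  have rAN : restr_perm A s \in 'N(M | 'P).
    apply: stabN => x xM; rewrite rpE // inE xM /=; by move: xM; rewrite -(stabE x sM).
  by apply/permP => x; rewrite (rpE x rAN) (rpE x sM); case: ifP => // xM; rewrite rpE // inE xM.
have rAB : restr_perm B (restr_perm A s) = restr_perm B s.
  have rAN : restr_perm A s \in 'N(B | 'P).
    apply: stabN => x xB; rewrite rpE // inE xB orbT /=; by move: xB; rewrite -(stabE x sB).
  by apply/permP => x; rewrite (rpE x rAN) (rpE x sB); case: ifP => // xB; rewrite rpE // inE xB orbT.
have rAMB : restr_perm A s = restr_perm M s * restr_perm B s.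
  apply/permP => x; rewrite permM !rpE // !inE.
  case: (boolP (x \in M)) => xM /=.
    have sxM : s x \in M by rewrite (stabE x sM).
    by rewrite (disjointFr dMB sxM).
  by [].
have prodR u1 u2 : perm_on M u1 -> perm_on B u2 ->
    restr_perm M (u1 * u2) = u1 /\ restr_perm B (u1 * u2) = u2.
  move=> p1 p2.
  have dBM : [disjoint B & M] by rewrite disjoint_sym.
  have u1B := perm_on_disjN p1 dBM.
  have u2M := perm_on_disjN p2 dMB.
  have u1M := perm_onN p1; have u2B := perm_onN p2.
  split; apply/permP => x.
    rewrite (rpE x (groupM u1M u2M)) permM; case: ifP => xM.
      have u1xM : u1 x \in M by rewrite perm_closed.
      by rewrite (out_perm p2) // (disjointFr dMB u1xM).
    by rewrite (out_perm p1) ?xM.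
  rewrite (rpE x (groupM u1B u2B)) permM; case: ifP => xB.
    by rewrite (out_perm p1) // (disjointFr dBM xB).
  by rewrite (out_perm p2) ?xB.
rewrite /G big_distrlr /= pair_big_dep /=.
rewrite (reindex_onto (fun p : {perm T} * {perm T} => p.1 * p.2)
                     (fun u => (restr_perm M u, restr_perm B u))); last first.
  by move=> u /andP[pu /eqP uk]; rewrite decomp // hyp.
apply: eq_big => [[u1 u2]|[u1 u2] _] /=; last by rewrite sgM.
apply/idP/idP.
  case/andP=> /andP[pu /eqP uk] /eqP[e1 e2].
  have uM := hyp _ pu uk; have uB := hBN _ pu uM.
  have q1 : perm_on M u1 by rewrite -e1 restr_perm_on.
  have q2 : perm_on B u2 by rewrite -e2 restr_perm_on.
  have k1 : u1 ^+ k = restr_perm M s by rewrite -e1 rpX // uk rAM.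
  have k2 : u2 ^+ k = restr_perm B s by rewrite -e2 rpX // uk rAB.
  by rewrite q1 q2 k1 k2 !eqxx.
case/andP=> /andP[p1 /eqP k1] /andP[p2 /eqP k2].
have [e1 e2] := prodR _ _ p1 p2.
rewrite e1 e2 eqxx andbT.
have sub1 : M \subset A by apply/subsetP => x; rewrite inE => ->.
have sub2 : B \subset A by apply/subsetP => x; rewrite inE => ->; rewrite orbT.
rewrite perm_onM /=; [|exact: subset_trans p1 sub1|exact: subset_trans p2 sub2].
rewrite expgMn; last exact: perm_onC p1 p2 dMB.
by rewrite k1 k2 rAMB.
Qed.

End Split.

Section Lists.
Variable T : finType.
Implicit Types (u v s : {perm T}) (S A M B : {set T}).
Local Open Scope group_scope.

Definition AL s (L : seq nat) : {set T} := [set x | #|porbit s x| \in L].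

Lemma card_porbit_s s x : #|porbit s (s x)| = #|porbit s x|.
Proof. by have := porbit_perm s 1 x; rewrite expg1 => ->. Qed.

Lemma AL_N s L : s \in 'N(AL s L | 'P).
Proof. by apply: stabN => x; rewrite !inE card_porbit_s. Qed.

Lemma cyc_N s l : s \in 'N(cyc_pts s l | 'P).
Proof. by apply: stabN => x; rewrite !inE card_porbit_s. Qed.

Lemma G_list k s L : uniq L -> G k s (AL s L) = (\prod_(l <- L) G k s (cyc_pts s l))%R.
Proof.
elim: L => [_|l L IH /= /andP[lL uL]].
  rewrite big_nil (_ : AL s [::] = set0) ?G0 //.
rewrite big_cons -IH //.
have eA : AL s (l :: L) = cyc_pts s l :|: AL s L.
  by apply/setP => x; rewrite !inE.
rewrite eA; apply: G_split; [| exact: cyc_N | exact: AL_N |].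
  rewrite -setI_eq0; apply/eqP/setP => x; rewrite !inE.
  by case: eqP => // ->; rewrite (negbTE lL).
move=> u pu uk; rewrite -eA in pu uk *.
apply: stabN => x xM.
have xA : x \in AL s (l :: L) by rewrite eA inE xM.
have uxA : u x \in AL s (l :: L) by rewrite perm_closed.
have cur : commute u (restr_perm (AL s (l :: L)) s).
  by rewrite -uk; apply: commuteX.
have := card_porbit_comm x cur.
rewrite !porbit_rp ?AL_N // !inE => ->.
by move: xM; rewrite !inE.
Qed.

Lemma AL_all s : AL s (cyc_lengths s) = [set: T].
Proof.
apply/setP => x; rewrite !inE mem_undup.
by apply: map_f; rewrite mem_enum.
Qed.

End Lists.

Section Transport.
Variables (T : finType) (M : {set T}).
Local Notation sub := {x : T | x \in M}.
Local Open Scope group_scope.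

Definition ext_fun (v : {perm sub}) (x : T) : T :=
  if (insub x : option sub) is Some y then val (v y) else x.

Lemma ext_fun_inj v : injective (ext_fun v).
Proof.
move=> x1 x2; rewrite /ext_fun.
case: insubP => [y1 _ <-|n1]; case: insubP => [y2 _ <-|n2] //.
- by move/val_inj/perm_inj => ->.
- by move=> e; move: n2; rewrite -e (valP (v y1)).
- by move=> e; move: n1; rewrite e (valP (v y2)).
Qed.

Definition ext v : {perm T} := perm (@ext_fun_inj v).

Lemma extE v y : ext v (val y) = val (v y).
Proof. by rewrite permE /ext_fun valK. Qed.

Lemma ext_out v x : x \notin M -> ext v x = x.
Proof. by move=> xM; rewrite permE /ext_fun insubN. Qed.

Lemma ext_on v : perm_on M (ext v).
Proof. by apply/subsetP => x; rewrite inE; apply: contraR => xM; rewrite ext_out. Qed.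

Lemma ext_cases (P : T -> Prop) : (forall y : sub, P (val y)) -> (forall x, x \notin M -> P x) -> forall x, P x.
Proof. by move=> h1 h2 x; case: (insubP sub x) => [y _ <-|]; [exact: h1|exact: h2]. Qed.

Lemma ext_mul v w : ext (v * w) = ext v * ext w.
Proof.
apply/permP; apply: ext_cases => [y|x xM]; first by rewrite permM (extE (v * w)) permM (extE v) (extE w).
by rewrite permM !ext_out.
Qed.

Lemma ext1 : ext 1 = 1.
Proof.
apply/permP; apply: ext_cases => [y|x xM]; first by rewrite (extE 1) !perm1.
by rewrite ext_out ?perm1.
Qed.

Lemma extX v n : ext (v ^+ n) = ext v ^+ n.
Proof. by elim: n => [|n IH]; rewrite ?expg0 ?ext1 // !expgS ext_mul IH. Qed.

Lemma ext_injective : injective ext.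
Proof.
move=> v w e; apply/permP => y; apply: val_inj.
by rewrite -(extE v) -(extE w) e.
Qed.

Lemma ext_tperm a b : ext (tperm a b) = tperm (val a) (val b).
Proof.
apply/permP; apply: ext_cases => [y|x xM].
  by rewrite (extE (tperm a b)) (inj_tperm _ _ _ val_inj).
rewrite ext_out // tpermD //; apply: contraNneq xM => <-; exact: valP.
Qed.

Lemma odd_ext v : odd_perm (ext v) = odd_perm v.
Proof.
case: (prod_tpermP v) => ts -> dts.
rewrite (big_morph ext ext_mul ext1) odd_perm_prod //.
rewrite (eq_bigr (fun t => tperm (val t.1) (val t.2))); last by move=> t _; exact: ext_tperm.
rewrite -(big_map (fun t : sub * sub => (val t.1, val t.2)) xpredT (fun t => tperm t.1 t.2)).
rewrite odd_perm_prod ?size_map //.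
by rewrite all_map; apply: sub_all dts => t /=; rewrite /dpair /= inj_eq //; exact: val_inj.
Qed.

Lemma rs_val u y : u \in 'N(M | 'P) -> val (restr_sub M u y) = u (val y).
Proof.
move=> uN; rewrite /restr_sub.
have inj : injective (@restr_fun T M u).
  move=> y1 y2 /(congr1 val); rewrite /restr_fun !val_insubd.
  rewrite !(stabE _ uN) (valP y1) (valP y2) => /perm_inj; exact: val_inj.
case: injectiveP => [inj'|ninj]; last by case: (ninj inj).
by rewrite permE /restr_fun val_insubd (stabE _ uN) (valP y).
Qed.

Lemma ext_rs u : perm_on M u -> ext (restr_sub M u) = u.
Proof.
move=> pu; apply/permP; apply: ext_cases => [y|x xM].
  by rewrite (extE (restr_sub M u)) rs_val // perm_onN.
by rewrite ext_out // (out_perm pu).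
Qed.

Lemma rs_ext v : restr_sub M (ext v) = v.
Proof.
apply/permP => y; apply: val_inj; rewrite rs_val ?(extE v) //.
exact: perm_onN (ext_on v).
Qed.

Lemma ext_rs_s s : s \in 'N(M | 'P) -> ext (restr_sub M s) = restr_perm M s.
Proof.
move=> sN; apply/permP; apply: ext_cases => [y|x xM].
  by rewrite (extE (restr_sub M s)) rs_val // rpE // (valP y).
by rewrite ext_out // rpE // (negbTE xM).
Qed.

Lemma G_transport k s : s \in 'N(M | 'P) -> G k s M = SS k (restr_sub M s).
Proof.
move=> sN; rewrite /G /SS.
rewrite (reindex_onto ext (restr_sub M)); last by move=> u /andP[pu _]; exact: ext_rs.
apply: eq_big => [v|v _]; last by rewrite /sg odd_ext.
rewrite ext_on rs_ext eqxx andbT /= -extX -(ext_rs_s sN).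
by rewrite (inj_eq ext_injective).
Qed.

End Transport.

Theorem lemma1 (n k : nat) (s : {perm 'I_n}) :
  (0 < k)%N ->
  (exists t : {perm 'I_n}, (t ^+ k)%g = s) ->
  (re k s)%:Z - (ro k s)%:Z =
  \prod_(l <- cyc_lengths s)
     ((re k (restr_sub (cyc_pts s l) s))%:Z - (ro k (restr_sub (cyc_pts s l) s))%:Z).
Proof.
move=> _ _.
rewrite reroE -GT -(AL_all s) G_list ?undup_uniq //.
apply: eq_bigr => l _.
by rewrite reroE G_transport // cyc_N.
Qed.
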